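(* Let $G$ be a finite simple graph on vertex set $\{x_1,\dots,x_n\}$, let $\Bbbk$ be a field and $S=\Bbbk[x_1,\dots,x_n]$. If $M$ is a $2$-admissable matching of $G$ which is a perfect matching of $G$, then for all $2\leq k\leq |M|$, \[b_{|M|-k+1,\,2|M|}(S/I(G)^{[k]})\neq 0.\]
   Context: $b_{i,j}$ denotes the graded Betti numbers over $S$. $I(G)$ is the edge ideal; $I(G)^{[k]}$ is generated by the products $e_1\cdots e_k$ over all matchings of size $k$ (edge $\{x_i,x_j\}$ identified with $x_ix_j$), and is $(0)$ if $k>\operatorname{mat}(G)$ (the matching number). A perfect matching covers every vertex. Two edges form a gap if they are disjoint and no edge joins a vertex of one to a vertex of the other. A sequence $(a_1,\dots,a_n)$ of integers is $k$-admissable if $a_i\ge1$ and $\sum a_i\le n+k-1$. For $1\le k\le\operatorname{mat}(G)$, a matching $M$ is $k$-admissable if there are nonempty pairwise disjoint $M_1,\dots,M_r\subseteq M$ with union $M$ such that edges from different $M_i$'s always form a gap in $G$, $(|M_1|,\dots,|M_r|)$ is $k$-admissable, and the induced subgraph on $\bigcup_{e\in M_i}e$ is a forest for each $i$. *)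

(* Defs.v *)
From HB Require Import structures.
From mathcomp Require Import all_boot all_order all_algebra.
Set Implicit Arguments. Unset Strict Implicit. Unset Printing Implicit Defensive.
Import GRing.Theory.

Section Graphs.
Variable n : nat.
(* A finite simple graph on vertices x_1..x_n is encoded as a symmetric,
   irreflexive relation e on 'I_n (symmetry/irreflexivity are hypotheses
   of the theorem).  Edges are 2-element vertex sets. *)
Variable e : rel 'I_n.

Definition is_edge (f : {set 'I_n}) : bool :=
  [exists x, exists y, e x y && (f == [set x; y])].

Definition matching (M : {set {set 'I_n}}) : bool :=
  [forall f in M, is_edge f] &&
  [forall f in M, forall g in M, (f != g) ==> [disjoint f & g]].

Definition perfect_matching (M : {set {set 'I_n}}) : bool :=
  matching M && (cover M == [set: 'I_n]).

Definition gap (f g : {set 'I_n}) : bool :=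
  [disjoint f & g] && [forall x in f, forall y in g, ~~ e x y].

Definition forest_on (W : {set 'I_n}) : Prop :=
  forall s : seq 'I_n, uniq s -> 3 <= size s -> all (mem W) s -> ~~ cycle e s.

(* k-admissable matching: a partition M_1,...,M_r of M into nonempty blocks
   such that edges in different blocks form gaps, (|M_1|,...,|M_r|) is
   k-admissable (a_i >= 1 and sum a_i <= r + k - 1), and each block induces
   a forest. *)
Definition admissible_matching (k : nat) (M : {set {set 'I_n}}) : Prop :=
  matching M /\
  exists P : {set {set {set 'I_n}}},
    [/\ partition P M,
        [forall A in P, forall B in P,
           (A != B) ==> [forall f in A, forall g in B, gap f g]],
        (forall A, A \in P -> 1 <= #|A|),
        \sum_(A in P) #|A| <= #|P| + k - 1
      & forall A, A \in P -> forest_on (cover A)].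

(* Membership of the monomial x^m in the monomial ideal I(G)^[k]:
   x^m is divisible by some generator x^{V(N)}, N a matching with |N| = k.
   (If k > mat(G) there are no such N and the ideal is (0).) *)
Definition in_sqpow (k : nat) (m : 'I_n -> nat) : bool :=
  [exists N : {set {set 'I_n}},
     [&& matching N, #|N| == k & [forall x in cover N, 0 < m x]]].

(* ---- Graded Betti numbers of S/I(G)^[k], S = K[x_1..x_n] ----
   b_{i,j}(S/I) = dim_K Tor_i^S(S/I, K)_j, computed as the homology of the
   Koszul complex K(x_1..x_n) (x) S/I in degree j.  Since I is a monomial
   ideal, S/I has K-basis the monomials x^m not in I, so the degree-j part
   of K_i(x; S/I) has basis e_F (x) x^m with |F| = i, deg m = j - i,
   x^m not in I; and d(e_F (x) x^m) = sum_{x in F} (+-) e_{F\x} (x) x*x^m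
   (terms with x*x^m in I vanish). *)
Variable K : fieldType.
Variable k : nat.

Section Degree.
Variable j : nat.

Definition kbasis_t := ({set 'I_n} * {ffun 'I_n -> 'I_j.+1})%type.

Definition mdeg (m : {ffun 'I_n -> 'I_j.+1}) : nat := \sum_(x : 'I_n) (m x : nat).

Definition kvalid (i : nat) (p : kbasis_t) : bool :=
  [&& #|p.1| == i, i <= j, mdeg p.2 == j - i & ~~ in_sqpow k (fun x => (p.2 x : nat))].

Definition kd_entry (i : nat) (p q : kbasis_t) : K :=
  match [pick x in p.1 :\: q.1] with
  | Some x =>
      if [&& 0 < i, kvalid i p, kvalid i.-1 q, q.1 == p.1 :\ x &
             [forall y, (q.2 y : nat) == p.2 y + (y == x)]]
      then ((-1) ^+ #|[set y in p.1 | (y < x)%N]|)%R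
      else 0%R
  | None => 0%R
  end.

(* matrix of the differential d_i : K_i -> K_{i-1} in degree j
   (rows/columns outside the basis are zero) *)
Definition kmat (i : nat) : 'M[K]_(#|{: kbasis_t}|) :=
  \matrix_(a, b) kd_entry i (enum_val a) (enum_val b).

Definition betti (i : nat) : nat :=
  #|[set p : kbasis_t | kvalid i p]| - \rank (kmat i) - \rank (kmat i.+1).

End Degree.
End Graphs.

(* Main.v *)
Require Import Defs.
From mathcomp Require Import all_boot all_order all_algebra.
From mathcomp Require Import zify.
Set Implicit Arguments. Unset Strict Implicit. Unset Printing Implicit Defensive.
Import GRing.Theory.

Local Open Scope ring_scope.

Section LA.
Variables (n : nat) (e : rel 'I_n) (K : fieldType) (k j i : nat).
Local Notation N := #|{: kbasis_t n j}|.
Local Notation A := (kmat e K k j i).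
Local Notation B := (kmat e K k j i.+1).

Lemma A_row0 a b : ~~ kvalid e k i (enum_val a) -> A a b = 0.
Proof.
move=> nv; rewrite mxE /kd_entry; case: pickP => // x _.
by rewrite (negbTE nv) andbF.
Qed.

Lemma B_col0 a b : ~~ kvalid e k i (enum_val b) -> B a b = 0.
Proof.
move=> nv; rewrite mxE /kd_entry; case: pickP => // x _.
by rewrite /= (negbTE nv) !andbF.
Qed.

Definition Sv := [set a : 'I_N | kvalid e k i (enum_val a)].
Definition Dv : 'M[K]_N := \matrix_(a, b) ((a == b) && (a \in Sv))%:R.
Definition Em : 'M[K]_(#|Sv|, N) := \matrix_(r, b) (enum_val r == b)%:R.

Lemma DvE : Dv = Em^T *m Em.
Proof.
apply/matrixP => a b; rewrite !mxE.
case: (boolP (a \in Sv)) => aS.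
  rewrite (bigD1 (enum_rank_in aS a)) //= !mxE enum_rankK_in // eqxx mul1r.
  rewrite big1 ?addr0 ?andbT // => r ra; rewrite !mxE.
  case: eqP => [ea|]; last by rewrite mul0r.
  by case/eqP: ra; apply: enum_val_inj; rewrite enum_rankK_in.
rewrite andbF big1 // => r _; rewrite !mxE.
case: eqP => [ea|]; last by rewrite mul0r.
by case/negP: aS; rewrite -ea enum_valP.
Qed.

Lemma DvA : Dv *m A = A.
Proof.
apply/matrixP => a b; rewrite [LHS]mxE (bigD1 a) //= [Dv a a]mxE eqxx /=.
rewrite big1 ?addr0.
  case: (boolP (a \in Sv)) => aS; first by rewrite mul1r.
  by rewrite mul0r A_row0 //; move: aS; rewrite inE.
by move=> c ca; rewrite [Dv _ _]mxE eq_sym (negbTE ca) mul0r.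
Qed.

Lemma MDv m (C : 'M[K]_(m, N)) : (forall r a, a \notin Sv -> C r a = 0) -> C *m Dv = C.
Proof.
move=> H; apply/matrixP => r b; rewrite [LHS]mxE (bigD1 b) //= [Dv b b]mxE eqxx /=.
rewrite big1 ?addr0.
  case: (boolP (b \in Sv)) => bS; first by rewrite mulr1.
  by rewrite mulr0 H.
by move=> c cb; rewrite [Dv _ _]mxE (negbTE cb) mulr0.
Qed.

Lemma rank_bound (z : 'rV[K]_N) (phi : 'cV[K]_N) :
  (forall a, a \notin Sv -> z 0 a = 0) -> z *m A = 0 -> B *m phi = 0 ->
  z *m phi != 0 -> B *m A = 0 -> (\rank A + \rank B < #|Sv|)%N.
Proof.
move=> zS zA Bphi zphi BA.
set C := col_mx B z.
have CA : C *m A = 0 by rewrite mul_col_mx BA zA col_mx0.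
have CDv : (C <= Dv)%MS.
  rewrite -(MDv (C := C)); first exact: submxMl.
  move=> r a aS; rewrite /C; rewrite -[r](splitK); case: (split r) => r' /=.
    by rewrite col_mxEu B_col0 //; move: aS; rewrite inE.
  by rewrite col_mxEd ord1 zS.
have rkBC : (\rank B < \rank C)%N.
  apply: rank_ltmx; rewrite ltmxE; apply/andP; split.
    by rewrite /C -addsmxE addsmxSl.
  apply/negP => CB; move: zphi; have : (z <= B)%MS.
    by move: CB; rewrite col_mx_sub => /andP[].
  by case/submxP => w ->; rewrite -mulmxA Bphi mulmx0 eqxx.
have rkC : (\rank C <= \rank (Dv :&: kermx A))%N.
  by apply: mxrankS; rewrite sub_capmx CDv; apply/sub_kermxP.
have := mxrank_mul_ker Dv A; rewrite DvA => eq1.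
have rkD : (\rank Dv <= #|Sv|)%N.
  by rewrite DvE; apply: leq_trans (mxrankM_maxr _ _) (rank_leq_row _).
lia.
Qed.

Lemma card_Sv : #|Sv| = #|[set p : kbasis_t n j | kvalid e k i p]|.
Proof.
have -> : [set p : kbasis_t n j | kvalid e k i p] = enum_val @: Sv.
  apply/setP => p; rewrite inE; apply/idP/imsetP => [pv|[a]].
    by exists (enum_rank p); rewrite ?inE enum_rankK.
  by rewrite inE => av ->.
by rewrite card_imset //; exact: enum_val_inj.
Qed.

Lemma betti_pos (z : 'rV[K]_N) (phi : 'cV[K]_N) :
  (forall a, ~~ kvalid e k i (enum_val a) -> z 0 a = 0) -> z *m A = 0 -> B *m phi = 0 ->
  z *m phi != 0 -> B *m A = 0 -> betti e K k j i != 0%N.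
Proof.
move=> zS zA Bphi zphi BA.
have H : (\rank A + \rank B < #|Sv|)%N.
  apply: (rank_bound (phi := phi)) zA Bphi zphi BA => a; rewrite inE; exact: zS.
rewrite card_Sv in H; rewrite /betti; apply/eqP => h; lia.
Qed.
End LA.

Local Close Scope ring_scope.

Local Open Scope ring_scope.

Section D2.
Variables (n : nat) (e : rel 'I_n) (K : fieldType) (k j : nat).

Definition sgn (P : {set 'I_n}) (x : 'I_n) : K :=
  (-1) ^+ #|[set y in P | (y < x)%N]|.

Lemma kd_entryP i (p q : kbasis_t n j) : kd_entry e K k i p q != 0 ->
  exists2 x, x \in p.1 & [/\ q.1 = p.1 :\ x,
     forall y, (q.2 y : nat) = (p.2 y + (y == x))%N,
     [&& (0 < i)%N, kvalid e k i p & kvalid e k i.-1 q] &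
     kd_entry e K k i p q = sgn p.1 x].
Proof.
rewrite /kd_entry; case: pickP => [x|]; last by rewrite eqxx.
rewrite inE => /andP[xnq xp]; case: ifP; last by rewrite eqxx.
case/and5P => i0 vp vq /eqP q1 /forallP q2 _; exists x => //; split => //.
- by move=> y; apply/eqP; exact: q2.
- by rewrite i0 vp vq.
Qed.

Lemma kd_entryE i (p q : kbasis_t n j) x : x \in p.1 -> q.1 = p.1 :\ x ->
  (forall y, (q.2 y : nat) = (p.2 y + (y == x))%N) -> (0 < i)%N ->
  kvalid e k i p -> kvalid e k i.-1 q -> kd_entry e K k i p q = sgn p.1 x.
Proof.
move=> xp q1 q2 i0 vp vq; rewrite /kd_entry.
have -> : p.1 :\: q.1 = [set x].
  rewrite q1; apply/setP => y; rewrite !inE.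
  by case: (eqVneq y x) => [->|_] /=; [rewrite xp | case: (y \in p.1)].
rewrite pick_set1 i0 vp vq q1 eqxx /=.
have -> : [forall y, (q.2 y : nat) == (p.2 y + (y == x))%N] by apply/forallP => y; rewrite q2.
by [].
Qed.

Lemma in_sqpow_mono (m1 m2 : 'I_n -> nat) :
  (forall x, (0 < m1 x)%N -> (0 < m2 x)%N) -> in_sqpow e k m1 -> in_sqpow e k m2.
Proof.
move=> H /existsP[N /and3P[mN cN /forallP fN]]; apply/existsP; exists N.
rewrite mN cN /=; apply/forallP => x; apply/implyP => xN.
by apply: H; move/implyP: (fN x); apply.
Qed.

Lemma sgn_pair (P : {set 'I_n}) x y : x \in P -> y \in P -> x != y ->
  sgn P x * sgn (P :\ x) y + sgn P y * sgn (P :\ y) x = 0.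
Proof.
wlog xy : x y / (x < y)%N.
  move=> W xP yP nxy; case: (ltngtP x y) => [h|h|h].
  - exact: W.
  - by rewrite addrC; apply: W => //; rewrite eq_sym.
  - by case/eqP: nxy; apply: val_inj.
move=> xP yP nxy.
have c1 : #|[set z in P | (z < y)%N]| = (#|[set z in P :\ x | (z < y)%N]|).+1.
  have -> : [set z in P | (z < y)%N] = x |: [set z in P :\ x | (z < y)%N].
    apply/setP => z; rewrite !inE; case: (eqVneq z x) => [->|] //=.
    by rewrite xP xy.
  by rewrite cardsU1 !inE eqxx.
have c2 : #|[set z in P :\ y | (z < x)%N]| = #|[set z in P | (z < x)%N]|.
  apply: eq_card => z; rewrite !inE; case: (eqVneq z y) => [->|] //=.
  by rewrite ltnNge (ltnW xy) andbF.
rewrite /sgn c1 c2 exprS.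
by rewrite mulN1r mulNr [X in _ - X]mulrC subrr.
Qed.

Lemma sum_pair (T : finType) (F : T -> K) a b : a != b ->
  (forall q, q != a -> q != b -> F q = 0) -> \sum_q F q = F a + F b.
Proof.
move=> ab H; rewrite (bigD1 a) //= (bigD1 b) 1?eq_sym //= big1 ?addr0 //.
by move=> q /andP[qb qa]; apply: H.
Qed.

Lemma kbasis_eq (p q : kbasis_t n j) : p.1 = q.1 -> (forall y, (p.2 y : nat) = q.2 y) -> p = q.
Proof.
case: p q => [p1 p2] [q1 q2] /= -> H; congr (_, _).
by apply/ffunP => y; apply: val_inj; exact: H.
Qed.

Lemma mdeg_add (m : {ffun 'I_n -> 'I_j.+1}) (m' : {ffun 'I_n -> 'I_j.+1}) y :
  (forall z, (m' z : nat) = (m z + (z == y))%N) -> mdeg m' = (mdeg m).+1.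
Proof.
move=> H; rewrite /mdeg (eq_bigr _ (fun z _ => H z)) big_split /=.
have -> : (\sum_z (z == y : nat) = 1)%N.
  by rewrite (bigD1 y) //= eqxx big1 // => z /negbTE ->.
by rewrite addn1.
Qed.

Lemma d2 i : kmat e K k j i.+1 *m kmat e K k j i = 0.
Proof.
apply/matrixP => a c; rewrite !mxE.
set p := enum_val a; set r := enum_val c.
rewrite (reindex enum_rank); last by apply: onW_bij; exact: enum_rank_bij.
under eq_bigr => b _ do rewrite !mxE enum_rankK.
case: (boolP [exists q, kd_entry e K k i.+1 p q * kd_entry e K k i q r != 0]); last first.
  move/existsPn => H; apply: big1 => q _; move/negPn: (H q) => /eqP.
  by [].
case/existsP => q0; rewrite mulf_eq0 negb_or => /andP[/kd_entryP[x xp [q01 q02 /and3P[_ vp vq0] s0]]].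
move=> /kd_entryP[y yq0 [r1 r2 /and3P[i0 _ vr] s1]].
have yp : y \in p.1 by move: yq0; rewrite q01 !inE => /andP[].
have xy : x != y by apply/eqP => h; move: yq0; rewrite q01 h !inE eqxx.
have r2' z : (r.2 z : nat) = (p.2 z + (z == x) + (z == y))%N by rewrite r2 q02.
pose m1 := [ffun z => (inord (p.2 z + (z == y)) : 'I_j.+1)].
have m1E z : (m1 z : nat) = (p.2 z + (z == y))%N.
  rewrite ffunE inordK //; move: (ltn_ord (r.2 z)); rewrite r2' => h; clear -h; lia.
pose q1 : kbasis_t n j := (p.1 :\ y, m1).
have q1q0 : q1 != q0.
  apply/negP => /eqP h; move: (congr1 (fun q : kbasis_t n j => x \in q.1) h) => /=.
  by rewrite q01 !inE eqxx xp xy.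
move: (vp) (vr) (vq0) => /and4P[/eqP cp ij /eqP dp sp] /and4P[/eqP cr _ /eqP dr sr] /and4P[_ _ _ sq0].
have vq1 : kvalid e k i q1.
  apply/and4P; split.
  - by apply/eqP; have := cardsD1 y p.1; rewrite yp cp /= => h; clear -h; lia.
  - exact: ltnW.
  - by rewrite (mdeg_add (m := p.2) m1E) dp subnSK.
  - apply/negP => /(in_sqpow_mono _) H; move/negP: sr; apply; apply: H => z.
    by rewrite m1E r2' => h; clear -h; lia.
rewrite (sum_pair (a := q0) (b := q1)) 1?eq_sym //; last first.
  move=> q nq0 nq1; apply/eqP; rewrite mulf_eq0; apply/negPn/negP.
  rewrite negb_or => /andP[/kd_entryP[x' x'p [q1' q2' _ _]] /kd_entryP[y' y'q [rq1 rq2 _ _]]].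
  have : (x' == x) || (x' == y).
    apply/negPn/negP; rewrite negb_or => /andP[h1 h2].
    have : x' \in r.1 by rewrite r1 q01 !inE h1 h2 x'p.
    by rewrite rq1 q1' !inE eqxx /= ?andbF.
  case/orP => /eqP ex.
    case/eqP: nq0; apply: kbasis_eq => [|z]; first by rewrite q1' q01 ex.
    by rewrite q2' q02 ex.
  case/eqP: nq1; apply: kbasis_eq => [|z]; first by rewrite q1' ex.
  by rewrite q2' m1E ex.
have xq1 : x \in q1.1 by rewrite /= !inE xy xp.
have r1' : r.1 = q1.1 :\ x.
  rewrite r1 q01 /=; apply/setP => z; rewrite !inE.
  by case: (z == x); case: (z == y).
rewrite (@kd_entryE i.+1 p q1 y yp (erefl _) m1E) //.
rewrite (@kd_entryE i q1 r x xq1 r1') //; last first.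
  by move=> z; rewrite r2' m1E addnAC.
rewrite s0 s1 q01; exact: sgn_pair.
Qed.
End D2.

Local Close Scope ring_scope.

Local Open Scope ring_scope.

Lemma sign_odd_sum (R : pzRingType) (a b : nat) : odd (a + b) -> (-1) ^+ a + (-1) ^+ b = 0 :> R.
Proof.
move=> o.
have -> : (-1) ^+ b = (-1) ^+ a * (-1) ^+ (a + b) :> R.
  by rewrite -exprD addnA addnn -[in RHS]signr_odd oddD odd_double /= signr_odd.
by rewrite -[(-1) ^+ (a + b)]signr_odd o expr1 mulrN1 subrr.
Qed.

Section Trans.
Variables (n : nat) (K : fieldType) (beta : 'I_n -> nat).

Definition fpair (y z : 'I_n) : nat := ((beta y < beta z) && (z < y))%N.
Definition invc (F : {set 'I_n}) : nat := (\sum_(y in F) \sum_(z in F) fpair y z)%N.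

Lemma inv_U1 (w : 'I_n) (G : {set 'I_n}) : w \notin G ->
  invc (w |: G) = (invc G + \sum_(g in G) (fpair w g + fpair g w))%N.
Proof.
move=> wG; rewrite /invc big_setU1 //= big_setU1 //=.
have -> : fpair w w = 0%N by rewrite /fpair ltnn.
rewrite add0n.
under [X in (_ + X)%N]eq_bigr => y _ do rewrite big_setU1 //=.
rewrite big_split /= big_split /=.
by rewrite addnA [RHS]addnC.
Qed.

Lemma card_sum (A : {set 'I_n}) (Q : pred 'I_n) :
  #|[set y in A | Q y]| = (\sum_(y in A) Q y)%N.
Proof.
rewrite -sum1_card [LHS]big_mkcond [RHS]big_mkcond /=.
by apply: eq_bigr => y _; rewrite inE; case: (y \in A); case: (Q y).
Qed.

Lemma term_g (g w : 'I_n) b : g != w -> beta g != b -> beta w = b ->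
  ((g < w)%N + fpair w g + fpair g w = (beta g < b)%N + 2 * ((b < beta g) && (g < w))%N)%N.
Proof.
move=> gw gb wb; rewrite /fpair wb.
have gw' : (nat_of_ord g != nat_of_ord w) by [].
case: (ltngtP (beta g) b) => h; last by rewrite h eqxx in gb.
- by case: (ltngtP g w) => h2 //=; rewrite h2 eqxx in gw'.
- by case: (ltngtP g w) => h2 //=; rewrite ?andbF //; rewrite h2 eqxx in gw'.
Qed.

Lemma sign_pair2 (P : {set 'I_n}) x x' : x \in P -> x' \in P -> x != x' ->
  beta x = beta x' -> (forall g, g \in P -> g != x -> g != x' -> beta g != beta x) ->
  sgn K P x * (-1) ^+ invc (P :\ x) + sgn K P x' * (-1) ^+ invc (P :\ x') = 0.
Proof.
wlog xx : x x' / (x < x')%N.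
  move=> W xP x'P nxx bxx Hg; case: (ltngtP x x') => [h|h|h].
  - exact: W.
  - rewrite addrC; apply: W => //; first by rewrite eq_sym.
    by move=> g gP g1 g2; rewrite -bxx; apply: Hg.
  - by case/eqP: nxx; apply: val_inj.
move=> xP x'P nxx bxx Hg.
set G := P :\ x :\ x'.
have hx : P :\ x' = x |: G.
  rewrite /G setDDl (setUC [set x] [set x']) -setDDl setD1K //.
  by rewrite !inE xP andbT; apply/eqP => h; move: nxx; rewrite h eqxx.
have hx' : P :\ x = x' |: G.
  by rewrite /G setD1K // !inE x'P andbT; apply/eqP => h; move: nxx; rewrite h eqxx.
have xG : x \notin G by rewrite !inE eqxx andbF.
have x'G : x' \notin G by rewrite !inE eqxx.
have r1 : #|[set y in P | (y < x)%N]| = (\sum_(g in G) (g < x)%N)%N.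
  rewrite card_sum -(setD1K xP) big_setU1 ?inE ?eqxx //= ltnn add0n.
  rewrite -(setD1K (_ : x' \in P :\ x)) ?inE 1?eq_sym ?nxx // big_setU1 ?inE ?eqxx //=.
  by rewrite ltnNge (ltnW xx).
have r2 : #|[set y in P | (y < x')%N]| = (\sum_(g in G) (g < x')%N).+1.
  rewrite card_sum -(setD1K xP) big_setU1 ?inE ?eqxx //= xx.
  rewrite -(setD1K (_ : x' \in P :\ x)) ?inE 1?eq_sym ?nxx // big_setU1 ?inE ?eqxx //=.
  by rewrite ltnn.
rewrite /sgn r1 r2 hx hx' !inv_U1 //.
rewrite -!exprD; apply: sign_odd_sum.
set b := beta x.
have E w : w \in [set x; x'] -> ((\sum_(g in G) (g < w)%N) + \sum_(g in G) (fpair w g + fpair g w) =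
   \sum_(g in G) (beta g < b)%N + 2 * \sum_(g in G) ((b < beta g) && (g < w))%N)%N.
  move=> wx; rewrite -big_split /= big_distrr -big_split /=; apply: eq_bigr => g gG.
  have gP : g \in P by move: gG; rewrite !inE => /andP[_ /andP[]].
  have gx : g != x by move: gG; rewrite !inE => /andP[_ /andP[]].
  have gx' : g != x' by move: gG; rewrite !inE => /andP[].
  rewrite addnA (term_g (b := b)) //.
  - by case/set2P: wx => ->.
  - exact: Hg.
  - by case/set2P: wx => ->.
have E1 := E x (set21 _ _); have E2 := E x' (set22 _ _).
have -> : ((\sum_(g in G) (g < x)%N + (invc G + \sum_(g in G) (fpair x' g + fpair g x'))) +
   ((\sum_(g in G) (g < x')%N).+1 + (invc G + \sum_(g in G) (fpair x g + fpair g x))) =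
   ((\sum_(g in G) (g < x)%N + \sum_(g in G) (fpair x g + fpair g x)) +
    (\sum_(g in G) (g < x')%N + \sum_(g in G) (fpair x' g + fpair g x')) + (invc G).*2).+1)%N.
  rewrite -addnn; lia.
rewrite E1 E2 /= !oddD ?odd_double /=.
repeat match goal with |- context [odd ?t] => generalize (odd t) end.
by case; case; case.
Qed.
End Trans.

Local Close Scope ring_scope.

Local Open Scope ring_scope.

Section Coc.
Variables (n : nat) (e : rel 'I_n) (K : fieldType) (k j i : nat) (beta : 'I_n -> nat).
Hypothesis j0 : (0 < j)%N.

Definition ind (F : {set 'I_n}) : {ffun 'I_n -> 'I_j.+1} := [ffun v => inord (v \notin F)].
Lemma indE (F : {set 'I_n}) v : (ind F v : nat) = (v \notin F).
Proof. by rewrite ffunE inordK //; case: (v \notin F). Qed.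

Definition transv (F : {set 'I_n}) : bool :=
  [forall v, [exists u in F, beta u == beta v]] &&
  [forall u in F, forall u' in F, (beta u == beta u') ==> (u == u')].

Lemma transvP (F : {set 'I_n}) : transv F -> (forall v, exists2 u, u \in F & beta u = beta v) /\
  (forall u u', u \in F -> u' \in F -> beta u = beta u' -> u = u').
Proof.
case/andP => /forallP c /forallP d; split.
  by move=> v; case/existsP: (c v) => u /andP[uF /eqP h]; exists u.
move=> u u' uF u'F h; move/implyP: (d u) => /(_ uF) /forallP /(_ u') /implyP /(_ u'F).
by rewrite h eqxx => /eqP.
Qed.

Lemma transvI (F : {set 'I_n}) : (forall v, exists2 u, u \in F & beta u = beta v) ->
  (forall u u', u \in F -> u' \in F -> beta u = beta u' -> u = u') -> transv F.
Proof.
move=> c d; apply/andP; split.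
  by apply/forallP => v; have [u uF h] := c v; apply/existsP; exists u; rewrite uF h eqxx.
apply/forallP => u; apply/implyP => uF; apply/forallP => u'; apply/implyP => u'F.
by apply/implyP => /eqP h; rewrite (d u u').
Qed.

Definition phi (q : kbasis_t n j) : K :=
  if [&& transv q.1, #|q.1| == i & q.2 == ind q.1] then (-1) ^+ invc beta q.1 else 0.

Hypothesis Hvalid : forall F, transv F -> #|F| = i -> kvalid e k i (F, ind F).

Lemma cocycle (p : kbasis_t n j) : \sum_q kd_entry e K k i.+1 p q * phi q = 0.
Proof.
case: (boolP [exists q, kd_entry e K k i.+1 p q * phi q != 0]); last first.
  move/existsPn => H; apply: big1 => q _; move/negPn: (H q) => /eqP.
  by [].
case/existsP => q0; rewrite mulf_eq0 negb_or => /andP[/kd_entryP[x xp [q01 q02 /and3P[_ vp _] s0]]].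
rewrite /phi; case: ifP => [/and3P[T0 /eqP c0 /eqP e0] _|]; last by rewrite eqxx.
have [cov inj] := transvP T0.
have [x' x'q bx'] := cov x.
have x'p : x' \in p.1 by move: x'q; rewrite q01 !inE => /andP[].
have x'x : x' != x by move: x'q; rewrite q01 !inE => /andP[].
have xx' : x != x' by rewrite eq_sym.
have injx : forall g, g \in p.1 -> g != x -> beta g = beta x -> g = x'.
  move=> g gp gx bg; apply: inj; rewrite ?q01 ?inE ?gx ?gp ?x'x ?x'p //.
  by rewrite bg bx'.
have T1 : transv (p.1 :\ x').
  apply: transvI.
    move=> v; have [u uq bu] := cov v; move: uq; rewrite q01 !inE => /andP[ux up].
    case: (eqVneq u x') => [ex|ux'].
      by exists x; rewrite ?inE ?xx' ?xp // -bu ex bx'.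
    by exists u; rewrite ?inE ?ux' ?up.
  move=> u u'; rewrite !inE => /andP[ux' up] /andP[u'x' u'p] h.
  case: (eqVneq u x) => [eu|ux]; case: (eqVneq u' x) => [eu'|u'x].
  - by rewrite eu eu'.
  - by case/eqP: u'x'; apply: injx => //; rewrite -h eu.
  - by case/eqP: ux'; apply: injx => //; rewrite h eu'.
  - by apply: inj; rewrite ?q01 ?inE ?ux ?u'x ?up ?u'p.
have cp : #|p.1| = i.+1.
  have := cardsD1 x p.1; rewrite xp -q01 c0 => h; clear -h; lia.
have c1 : #|p.1 :\ x'| = i.
  have := cardsD1 x' p.1; rewrite x'p cp => h; clear -h; lia.
have p2E v : (p.2 v : nat) = (v \notin p.1).
  have := q02 v; rewrite e0 indE q01 !inE.
  case: (eqVneq v x) => [->|] /=; first by rewrite xp; lia.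
  by move=> _ ->; rewrite addn0.
pose q1 : kbasis_t n j := (p.1 :\ x', ind (p.1 :\ x')).
have q12 v : (q1.2 v : nat) = (p.2 v + (v == x'))%N.
  rewrite indE p2E !inE; case: (eqVneq v x') => [->|] /=; first by rewrite x'p.
  by rewrite addn0.
have q1q0 : q1 != q0.
  apply/negP => /eqP h; move: (congr1 (fun q : kbasis_t n j => x \in q.1) h) => /=.
  by rewrite q01 !inE eqxx xp xx'.
rewrite (sum_pair (a := q0) (b := q1)) 1?eq_sym //; last first.
  move=> q nq0 nq1; apply/eqP; rewrite mulf_eq0; apply/negPn/negP.
  rewrite negb_or => /andP[/kd_entryP[x'' x''p [q1' q2' _ _]]].
  rewrite /phi; case: ifP => [/and3P[Tq _ /eqP eq2] _|]; last by rewrite eqxx.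
  have [_ injq] := transvP Tq.
  have : (x'' == x) || (x'' == x').
    apply/negPn/negP; rewrite negb_or => /andP[h1 h2].
    have := injq x x'; rewrite q1' !inE xp x'p eq_sym h1 eq_sym h2 bx' => /(_ isT isT erefl) /eqP.
    by rewrite (negbTE xx').
  case/orP => /eqP ex.
    case/eqP: nq0; apply: kbasis_eq => [|z]; first by rewrite q1' q01 ex.
    by rewrite eq2 e0 q1' q01 ex.
  case/eqP: nq1; apply: kbasis_eq => [|z]; first by rewrite q1' ex.
  by rewrite eq2 q1' ex.
rewrite s0 /phi T0 c0 e0 !eqxx /= q01.
rewrite (@kd_entryE _ e K k j i.+1 p q1 x' x'p (erefl _) q12) //; last exact: Hvalid.
rewrite T1 c1 !eqxx /=.
apply: sign_pair2 => //.
move=> g gp gx gx'; apply/eqP => bg; case/eqP: gx'; exact: injx.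
Qed.
End Coc.

Local Close Scope ring_scope.

Lemma extend_subset (T : finType) d (A B : {set T}) : A \subset B -> #|A| + d <= #|B| ->
  exists Y : {set T}, [/\ A \subset Y, Y \subset B & #|Y| = #|A| + d].
Proof.
elim: d A => [|d IH] A AB cAB; first by exists A; rewrite addn0.
have : B :\: A != set0.
  apply/negP => /eqP h; have : B \subset A by rewrite -setD_eq0 h.
  move=> /subset_leq_card; lia.
case/set0Pn => b; rewrite inE => /andP[bA bB].
have [||Y [h1 h2 h3]] := IH (b |: A).
- by rewrite subUset sub1set bB AB.
- by rewrite cardsU1 bA; lia.
exists Y; split => //; first by apply: subset_trans h1; exact: subsetUr.
by rewrite h3 cardsU1 bA; lia.
Qed.

Section G.
Variables (n : nat) (e : rel 'I_n).
Hypotheses (e_sym : symmetric e) (e_irr : irreflexive e).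

Lemma edge_card f : is_edge e f -> #|f| = 2.
Proof.
case/existsP => x /existsP[y /andP[exy /eqP ->]].
rewrite cards2; case: (eqVneq x y) => // h; by rewrite h e_irr in exy.
Qed.

Lemma matching_sub (M N : {set {set 'I_n}}) : matching e M -> N \subset M -> matching e N.
Proof.
case/andP => /forallP h1 /forallP h2 NM; apply/andP; split.
  apply/forallP => f; apply/implyP => fN; move/implyP: (h1 f); apply.
  exact: (subsetP NM).
apply/forallP => f; apply/implyP => fN; apply/forallP => g; apply/implyP => gN.
move/implyP: (h2 f) => /(_ (subsetP NM _ fN)) /forallP /(_ g) /implyP; apply.
exact: (subsetP NM).
Qed.

Lemma matching_disj (M : {set {set 'I_n}}) f g v : matching e M -> f \in M -> g \in M ->
  v \in f -> v \in g -> f = g.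
Proof.
case/andP => _ /forallP h2 fM gM vf vg; apply/eqP; apply/negPn/negP => fg.
move/implyP: (h2 f) => /(_ fM) /forallP /(_ g) /implyP /(_ gM) /implyP /(_ fg).
by move/disjoint_setI0 => /setP /(_ v); rewrite !inE vf vg.
Qed.

Lemma matching_edge (M : {set {set 'I_n}}) f : matching e M -> f \in M -> is_edge e f.
Proof. by case/andP => /forallP h1 _ fM; move/implyP: (h1 f); apply. Qed.

Lemma card_cover_matching (M : {set {set 'I_n}}) : matching e M -> #|cover M| = 2 * #|M|.
Proof.
move=> mM.
have tM : trivIset M.
  apply/trivIsetP => f g fM gM fg; rewrite -setI_eq0; apply/eqP/setP => v; rewrite !inE; apply/negP => /andP[vf vg].
  by case/eqP: fg; apply: (matching_disj mM fM gM vf vg).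
move/eqP: tM => <-; rewrite (eq_bigr (fun _ => 2)); last first.
  by move=> f fM; apply: edge_card; exact: matching_edge mM fM.
by rewrite sum_nat_const mulnC.
Qed.
End G.

Section G2.
Variables (n : nat) (e : rel 'I_n) (M : {set {set 'I_n}}) (k : nat).
Hypotheses (e_sym : symmetric e) (e_irr : irreflexive e).
Hypotheses (pmM : perfect_matching e M) (adm : admissible_matching e 2 M).
Hypotheses (k2 : 2 <= k) (kM : k <= #|M|).

Lemma mM : matching e M. Proof. by case/andP: pmM. Qed.
Lemma covM : cover M = setT. Proof. by case/andP: pmM => _ /eqP. Qed.

Definition medge v := odflt set0 [pick f in M | v \in f].

Lemma medgeP v : medge v \in M /\ v \in medge v.
Proof.
rewrite /medge; case: pickP => [f /andP[fM vf]|] //=.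
have : v \in cover M by rewrite covM inE.
by case/bigcupP => f fM vf /(_ f); rewrite fM vf.
Qed.

Lemma medge_eq f v : f \in M -> v \in f -> medge v = f.
Proof.
move=> fM vf; have [m1 m2] := medgeP v.
exact: (matching_disj mM m1 fM m2 vf).
Qed.

Lemma existsY : exists Y : {set {set 'I_n}}, [/\ Y \subset M, #|Y| = k &
  forall a b, e a b -> medge a = medge b \/ (medge a \in Y /\ medge b \in Y)].
Proof.
case: adm => _ [P [partP gapP sz1 sumP _]].
have covP : cover P = M by case/and3P: partP => /eqP.
have trP : trivIset P by case/and3P: partP.
have sumE : \sum_(A in P) #|A| = #|P| + \sum_(A in P) (#|A| - 1).
  rewrite -sum1_card -big_split /=; apply: eq_bigr => A AP.
  by rewrite addnC subnK // sz1.
have sum1 : \sum_(A in P) (#|A| - 1) <= 1.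
  move: sumP; rewrite sumE; lia.
have le2 : forall A, A \in P -> #|A| <= 2.
  move=> A AP; move: sum1; rewrite (bigD1 A) //=; lia.
have uniq2 : forall A A', A \in P -> A' \in P -> 2 <= #|A| -> 2 <= #|A'| -> A = A'.
  move=> A A' AP A'P cA cA'; apply/eqP; apply/negPn/negP => AA'.
  move: sum1; rewrite (bigD1 A) //= (bigD1 A') /=; last by rewrite A'P eq_sym AA'.
  move: cA cA'; move: (#|A|) (#|A'|) => x y cx cy; lia.
have subP : forall A, A \in P -> A \subset M.
  by move=> A AP; rewrite -covP; apply/subsetP => f fA; apply/bigcupP; exists A.
have closure : forall a b, e a b -> medge a != medge b ->
    exists2 A, A \in P & [/\ 2 <= #|A|, medge a \in A & medge b \in A].
  move=> a b eab nab.
  have [fM af] := medgeP a; have [gM bg] := medgeP b.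
  set f := medge a in nab fM af *; set g := medge b in nab gM bg *.
  have fP : f \in cover P by rewrite covP.
  have gP : g \in cover P by rewrite covP.
  have Af := pblock_mem fP; have Bg := pblock_mem gP.
  case: (eqVneq (pblock P f) (pblock P g)) => [AB|AB]; last first.
    move/forallP: gapP => /(_ (pblock P f)) /implyP /(_ Af) /forallP /(_ (pblock P g)).
    move=> /implyP /(_ Bg) /implyP /(_ AB) /forallP /(_ f) /implyP.
    rewrite mem_pblock fP => /(_ isT) /forallP /(_ g) /implyP.
    rewrite mem_pblock gP => /(_ isT).
    case/andP => _ /forallP /(_ a) /implyP /(_ af) /forallP /(_ b) /implyP /(_ bg).
    by rewrite eab.
  exists (pblock P f) => //; split.
  - have : [set f; g] \subset pblock P f.
      by rewrite subUset !sub1set mem_pblock fP AB mem_pblock gP.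
    by move/subset_leq_card; rewrite cards2 nab.
  - by rewrite mem_pblock.
  - by rewrite AB mem_pblock.
case: (pickP [pred A in P | 2 <= #|A|]) => [A0 /andP[A0P cA0]|none].
  have [|Y [h1 h2 h3]] := extend_subset (d := k - #|A0|) (subP _ A0P).
    by rewrite subnKC //; apply: leq_trans (le2 _ A0P) k2.
  exists Y; split.
  - exact: h2.
  - by rewrite h3 subnKC //; apply: leq_trans (le2 _ A0P) k2.
  move=> a b eab; case: (eqVneq (medge a) (medge b)) => [ab|nab]; first by left.
  right; have [A AP [cA fA gA]] := closure a b eab nab.
  rewrite -(uniq2 _ _ A0P AP cA0 cA) in fA gA.
  by split; apply: (subsetP h1).
have [|Y [h1 h2 h3]] := extend_subset (d := k) (sub0set M).
  by rewrite cards0.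
exists Y; split => //; first by rewrite h3 cards0.
move=> a b eab; case: (eqVneq (medge a) (medge b)) => [ab|nab]; first by left.
have [A AP [cA fA gA]] := closure a b eab nab.
by move: (none A); rewrite /= AP cA.
Qed.
End G2.

Section G3.
Variables (n : nat) (e : rel 'I_n) (M : {set {set 'I_n}}) (k : nat).
Hypotheses (e_sym : symmetric e) (e_irr : irreflexive e).
Hypotheses (pmM : perfect_matching e M).
Hypotheses (k2 : 2 <= k) (kM : k <= #|M|).
Variables (Y : {set {set 'I_n}}).
Hypotheses (YM : Y \subset M) (cY : #|Y| = k)
  (clos : forall a b, e a b -> medge M a = medge M b \/ (medge M a \in Y /\ medge M b \in Y)).

Local Notation medge := (medge M).
Let mM := mM pmM.
Let medgeM v := (medgeP pmM v).1.
Let medgeIn v := (medgeP pmM v).2.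
Let medge_eq := medge_eq pmM.

Definition beta (v : 'I_n) : nat := if medge v \in Y then 0 else (enum_rank (medge v)).+1.

Lemma beta0 v : (beta v == 0) = (medge v \in Y).
Proof. by rewrite /beta; case: (medge v \in Y). Qed.

Lemma beta_med u v : beta u = beta v -> beta u != 0 -> medge u = medge v.
Proof.
rewrite /beta; case: (medge u \in Y) => [_|]; first by rewrite eqxx.
case: (medge v \in Y) => [h|/eqP]; first by move/eqP: h.
rewrite eqSS => h _; apply: enum_rank_inj; exact/eqP.
Qed.

Lemma beta_edge a b : e a b -> beta a = beta b.
Proof.
move=> eab; case: (clos eab) => [h|[ha hb]]; first by rewrite /beta h.
by rewrite /beta ha hb.
Qed.

Lemma coverY v : (v \in cover Y) = (medge v \in Y).
Proof.
apply/bigcupP/idP => [[f fY vf]|h]; last by exists (medge v).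
by rewrite (medge_eq (subsetP YM _ fY) vf).
Qed.

Lemma card_coverY : #|cover Y| = 2 * k.
Proof. by rewrite (card_cover_matching e_irr (matching_sub mM YM)) cY. Qed.

Lemma n2M : n = 2 * #|M|.
Proof. by rewrite -(card_cover_matching e_irr mM) (covM pmM) cardsT card_ord. Qed.

Lemma coverY_nonempty : exists v0, v0 \in cover Y.
Proof.
have : 0 < #|cover Y| by rewrite card_coverY; lia.
by case/card_gt0P => v0 h; exists v0.
Qed.

Lemma med_edge a b : e a b -> beta a != 0 -> medge a = [set a; b].
Proof.
move=> eab b0; apply/eqP; rewrite eq_sym eqEcard.
have bm : medge a = medge b by apply: beta_med => //; exact: beta_edge.
rewrite subUset !sub1set medgeIn bm medgeIn /=.
rewrite (edge_card e_irr (matching_edge mM (medgeM b))) cards2.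
by case: (eqVneq a b) => // h; rewrite h e_irr in eab.
Qed.

Lemma no_kmatch F : transv beta F -> forall N, matching e N -> #|N| = k ->
  (forall x, x \in cover N -> x \notin F) -> False.
Proof.
move=> TF N mN cN HN; have [cov inj] := transvP TF.
have sub : cover N \subset cover Y :\: F.
  apply/subsetP => x xN; rewrite inE (HN x xN) /=.
  case/bigcupP: xN => f fN xf.
  case/existsP: (matching_edge mN fN) => a /existsP[b /andP[eab /eqP fab]].
  case: (eqVneq (beta a) 0) => [ba|ba].
    have bb : beta b = 0 by rewrite -(beta_edge eab).
    move: xf; rewrite fab !inE => /orP[] /eqP ->; rewrite coverY -beta0; apply/eqP => //.
  have [u uF bu] := cov a.
  have : u \in f.
    rewrite fab -(med_edge eab ba) -(beta_med bu) ?bu //; exact: medgeIn.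
  move=> uf; have : u \in cover N by apply/bigcupP; exists f.
  by move/HN; rewrite uF.
have [v0 v0Y] := coverY_nonempty.
have [u0 u0F bu0] := cov v0.
have u0Y : u0 \in cover Y by rewrite coverY -beta0 bu0 beta0 -coverY.
have := subset_leq_card sub; rewrite (card_cover_matching e_irr mN) cN cardsD.
have : 0 < #|cover Y :&: F| by apply/card_gt0P; exists u0; rewrite inE u0Y u0F.
rewrite card_coverY; move: (#|cover Y :&: F|) => c; lia.
Qed.

Let j := 2 * #|M|.
Let i := #|M| - k + 1.
Hypothesis j0 : 0 < j.

Lemma valid F : transv beta F -> #|F| = i -> kvalid e k i ((F, ind j F) : kbasis_t n j).
Proof.
move=> TF cF; apply/and4P; split.
- by rewrite cF.
- rewrite /i /j; lia.
- have -> : mdeg (ind j F) = #|~: F|.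
    rewrite /mdeg -sum1_card [RHS]big_mkcond /=; apply: eq_bigr => v _.
    by rewrite (indE j0) inE; case: (v \in F).
  rewrite cardsCs setCK card_ord cF; apply/eqP; have := n2M; rewrite /i /j; lia.
- apply/negP => /existsP[N /and3P[mN /eqP cN /forallP HN]].
  apply: (no_kmatch TF mN cN) => x xN; move/implyP: (HN x) => /(_ xN).
  by rewrite /= (indE j0); case: (x \in F).
Qed.

Variable v0 : 'I_n.
Hypothesis v0Y : v0 \in cover Y.

Definition rep (f : {set 'I_n}) : 'I_n := odflt v0 [pick v in f].

Lemma rep_in f : f \in M -> rep f \in f.
Proof.
move=> fM; rewrite /rep; case: pickP => [v //|h].
have := edge_card e_irr (matching_edge mM fM).
by rewrite (eq_card0 h).
Qed.

Lemma medge_rep f : f \in M -> medge (rep f) = f.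
Proof. by move=> fM; apply: medge_eq fM (rep_in fM). Qed.

Definition F0 := v0 |: [set rep f | f in M :\: Y].

Lemma v0_med : medge v0 \in Y.
Proof. by rewrite -coverY. Qed.

Lemma F0P y : y \in F0 -> y = v0 \/ (medge y \notin Y /\ rep (medge y) = y).
Proof.
rewrite !inE => /orP[/eqP -> |/imsetP[f]]; first by left.
rewrite inE => /andP[fY fM] ->; right; rewrite medge_rep //.
Qed.

Lemma repF0 v : medge v \notin Y -> rep (medge v) \in F0.
Proof.
move=> h; rewrite !inE; apply/orP; right; apply/imsetP; exists (medge v) => //.
by rewrite inE h medgeM.
Qed.

Lemma T_F0 : transv beta F0.
Proof.
apply: transvI.
  move=> v; case: (boolP (medge v \in Y)) => h.
    exists v0; first by rewrite !inE eqxx.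
    by apply/eqP; rewrite -[beta v]/(beta v) eqn_leq; move: (beta0 v0) (beta0 v); rewrite h v0_med => /eqP -> /eqP ->.
  exists (rep (medge v)); first exact: repF0.
  by rewrite /beta medge_rep ?medgeM.
move=> u u' /F0P[->|[hu ru]] /F0P[->|[hu' ru']] //.
- move=> b0; exfalso; move: (beta0 u'); rewrite -b0 (negbTE hu').
  by move: (beta0 v0); rewrite v0_med => /eqP ->.
- move=> b0; exfalso; move: (beta0 u); rewrite b0 (negbTE hu).
  by move: (beta0 v0); rewrite v0_med => /eqP ->.
- move=> b; rewrite -ru -ru'; congr rep; apply: beta_med => //.
  by rewrite beta0.
Qed.

Lemma card_F0 : #|F0| = #|M| - k + 1.
Proof.
rewrite cardsU1.
have -> : v0 \in [set rep f | f in M :\: Y] = false.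
  apply/negP => /imsetP[f]; rewrite inE => /andP[fY fM] h.
  by move: v0_med; rewrite h medge_rep // (negbTE fY).
rewrite card_in_imset; last first.
  move=> f g; rewrite !inE => /andP[_ fM] /andP[_ gM] h.
  by rewrite -(medge_rep fM) h medge_rep.
by rewrite cardsD (setIidPr YM) cY /= addnC.
Qed.

Lemma cycleF0 x : x \in F0 -> forall m : 'I_n -> nat,
  (forall v, (v \notin F0) || (v == x) -> 0 < m v) -> in_sqpow e k m.
Proof.
move=> xF m Hm; apply/existsP.
case: (eqVneq x v0) => [xv0|xv0].
  exists Y; rewrite (matching_sub mM YM) cY eqxx /=; apply/forallP => y; apply/implyP => yY.
  apply: Hm; case: (eqVneq y x) => [->|yx]; first by apply/orP; right.
  rewrite ?(negbTE yx) orbF.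
  apply/negP => /F0P[yv0|[hy _]]; first by move: yx; rewrite yv0 xv0 eqxx.
  by move: hy; rewrite -coverY yY.
have [xv|[hx rx]] := F0P xF; first by rewrite xv eqxx in xv0.
exists (medge x |: (Y :\ medge v0)); apply/and3P; split.
- apply: matching_sub mM _; rewrite subUset sub1set medgeM /=.
  by apply: subset_trans YM; exact: subD1set.
- have := cardsD1 (medge v0) Y; rewrite v0_med cY => hY.
  rewrite cardsU1 !inE (negbTE hx) andbF /=; apply/eqP; move: hY; move: #|Y :\ medge v0| => c; lia.
apply/forallP => y; apply/implyP => /bigcupP[g]; rewrite !inE => /orP[/eqP ->|/andP[gv0 gY]] yg.
  apply: Hm; case: (eqVneq y x) => [->|yx]; first by apply/orP; right.
  rewrite ?(negbTE yx) orbF.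
  have my : medge y = medge x by apply: medge_eq (medgeM x) yg.
  apply/negP => /F0P[yv0|[_ ry]].
    by move: hx; rewrite -my yv0 v0_med.
  by case/eqP: yx; rewrite -ry my rx.
have my : medge y = g by apply: medge_eq (subsetP YM _ gY) yg.
apply: Hm; apply/orP; left; apply/negP => /F0P[yv0|[hy _]].
  by move: gv0; rewrite -my yv0 eqxx.
by move: hy; rewrite my gY.
Qed.
End G3.

Theorem lemma4p9 (K : fieldType) (n : nat) (e : rel 'I_n)
  (e_sym : symmetric e) (e_irr : irreflexive e) (M : {set {set 'I_n}}) :
  perfect_matching e M -> admissible_matching e 2 M ->
  forall k : nat, 2 <= k <= #|M| ->
    betti e K k (2 * #|M|) (#|M| - k + 1) != 0.
Proof.
move=> pmM adm k /andP[k2 kM].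
have [Y [YM cY clos]] := existsY pmM adm k2 kM.
have [v0 v0Y] := coverY_nonempty e_irr pmM k2 kM YM cY.
have j0 : 0 < 2 * #|M| by lia.
set j := 2 * #|M| in j0 *; set i := #|M| - k + 1.
have Hv := valid e_irr pmM k2 kM YM cY clos j0.
set F := F0 M Y v0.
have TF := T_F0 e_irr pmM YM v0Y.
have cF := card_F0 e_irr pmM YM cY v0Y.
set p0 : kbasis_t n j := (F, ind j F).
have vp0 : kvalid e k i p0 := Hv _ TF cF.
Local Open Scope ring_scope.
pose z : 'rV[K]_#|{: kbasis_t n j}| := (\row_a ((enum_val a == p0)%:R))%R.
pose ph : 'cV[K]_#|{: kbasis_t n j}| := (\col_b phi K i (beta M Y) (enum_val b))%R.
have zE m (A : 'M[K]_(#|{: kbasis_t n j}|, m)) c : (z *m A) 0 c = A (enum_rank p0) c.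
  rewrite mxE (bigD1 (enum_rank p0)) //= !mxE enum_rankK eqxx mul1r big1 ?addr0 // => a ha.
  rewrite mxE; case: eqP => [h|]; last by rewrite mul0r.
  by case/eqP: ha; rewrite -h enum_valK.
apply: (@betti_pos _ _ _ _ _ _ z ph).
- move=> a na; rewrite mxE; case: eqP => // h; by rewrite h vp0 in na.
- apply/matrixP => r c; rewrite ord1 zE mxE enum_rankK [RHS]mxE.
  apply/eqP; apply: contraT => /kd_entryP[x xp [r1 r2 /and3P[_ _ vr]] _].
  move/and4P: vr => [_ _ _ /negP H]; exfalso; apply: H.
  apply: (cycleF0 e_irr pmM k2 kM YM cY j0 v0Y xp) => v.
  move=> h; rewrite r2 /= (indE j0); case/orP: h => [->|/eqP ->] //.
  by rewrite eqxx addn1.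
- apply/matrixP => a c; rewrite mxE [RHS]mxE.
  under eq_bigr => b _ do rewrite !mxE.
  rewrite (reindex enum_rank); last by apply: onW_bij; exact: enum_rank_bij.
  under eq_bigr => q _ do rewrite enum_rankK.
  exact: (cocycle K j0 Hv).
- apply/negP => /eqP h; move: (congr1 (fun A : 'M[K]_1 => A 0 0) h).
  rewrite zE !mxE enum_rankK /phi /= TF cF !eqxx /=.
  by move/eqP; rewrite signr_eq0.
- exact: d2.
Qed.
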